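(* Let $G$ be a 5-vertex-critical $(P_5,\text{chair})$-free graph and let $C=v_1v_2v_3v_4v_5v_1$ be an induced $C_5$ in $G$. Then for every $1\le i\le 5$, the vertex set of every connected component of $G[S^2_3(i)]$ is a homogeneous set of $G$.
   Context: All graphs are finite and simple; $P_5$ is the path on 5 vertices; the chair is a $P_4$ plus a vertex adjacent to exactly one of the two middle vertices of the $P_4$; ''$H$-free'' means no induced subgraph isomorphic to $H$; $G$ is $k$-vertex-critical if $\chi(G)=k$ and $\chi(G-v)<k$ for all $v$. Indices modulo 5. $S^2_3(i)=\{v\in V(G)\setminus V(C): N(v)\cap V(C)=\{v_{i-2},v_i,v_{i+2}\}\}$. A set $H\subseteq V(G)$ is homogeneous if no vertex of $V(G)\setminus H$ is mixed on $H$, i.e. every vertex outside $H$ is adjacent to all or to none of the vertices of $H$. *)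

(* Defs.v *)
(* A finite simple graph is a symmetric irreflexive
   relation e on a finType T. *)
From mathcomp Require Import all_boot.
Set Implicit Arguments. Unset Strict Implicit. Unset Printing Implicit Defensive.

Section Graphs.
Variable T : finType.
Variable e : rel T.

Definition simple_graph := symmetric e /\ irreflexive e.

Definition contains_induced (n : nat) (h : rel 'I_n) :=
  exists f : 'I_n -> T, injective f /\ forall i j, e (f i) (f j) = h i j.

Definition free_of (n : nat) (h : rel 'I_n) := ~ contains_induced h.

Definition colorable_on (S : {set T}) (k : nat) :=
  exists c : T -> 'I_k, forall x y, x \in S -> y \in S -> e x y -> c x != c y.

Definition chromatic_number_is (k : nat) :=
  colorable_on setT k /\ ~ colorable_on setT k.-1.

(* k-vertex-critical: chi(G) = k and chi(G - v) < k, i.e. G - v is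
   (k-1)-colourable, for every vertex v. *)
Definition vertex_critical (k : nat) :=
  0 < k /\ chromatic_number_is k /\ forall v : T, colorable_on [set~ v] k.-1.

Definition induced_C5 (v : 'I_5 -> T) :=
  injective v /\
  forall i j : 'I_5, e (v i) (v j) = ((i.+1 %% 5 == j) || (j.+1 %% 5 == i)).

(* S^2_3(i): vertices outside C whose neighbours on C are exactly
   v_{i-2}, v_i, v_{i+2} *)
Definition S23 (v : 'I_5 -> T) (i : 'I_5) : {set T} :=
  [set x | [forall j : 'I_5, x != v j] &&
           [forall j : 'I_5, e x (v j) ==
              [|| (j : nat) == (i + 3) %% 5, j == i | (j : nat) == (i + 2) %% 5]]].

Definition induced_rel (S : {set T}) : rel T :=
  [rel a b | [&& a \in S, b \in S & e a b]].

Definition component (S : {set T}) (x : T) : {set T} :=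
  [set y | connect (induced_rel S) x y].

Definition homogeneous (H : {set T}) :=
  forall z, z \notin H -> (forall y, y \in H -> e z y) \/ (forall y, y \in H -> ~~ e z y).

End Graphs.

Definition P5_rel : rel 'I_5 :=
  fun i j : 'I_5 => ((i : nat).+1 == j) || ((j : nat).+1 == i).

(* chair: P4 0-1-2-3 plus vertex 4 adjacent to exactly the middle vertex 1 *)
Definition chair_rel : rel 'I_5 :=
  fun i j : 'I_5 => [|| [&& (i : nat) < 4, (j : nat) < 4 & (i.+1 == j :> nat) || (j.+1 == i :> nat)],
              ((i : nat) == 4) && ((j : nat) == 1) | ((i : nat) == 1) && ((j : nat) == 4)].

(* Main.v *)
Require Import Defs.
From mathcomp Require Import all_boot.
Set Implicit Arguments. Unset Strict Implicit. Unset Printing Implicit Defensive.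

Definition spn (i j : nat) : bool := [|| j == (i + 3) %% 5, j == i | j == (i + 2) %% 5].
Definition c5n (j k : nat) : bool := ((j.+1 %% 5 == k) || (k.+1 %% 5 == j)).
Definition adjC (i : nat) (l : seq bool) (k j : nat) : bool :=
  if k == 7 then nth false l j else spn i j.
Definition abn (p q : nat) : bool :=
  [|| (p == 5) && (q == 6), (p == 6) && (q == 5), (p == 5) && (q == 7) | (p == 7) && (q == 5)].
Definition Hn (i : nat) (l : seq bool) (p q : nat) : bool :=
  if p < 5 then (if q < 5 then c5n p q else adjC i l q p)
  else if q < 5 then adjC i l p q else abn p q.
Definition twinfreen (R : nat -> nat -> bool) :=
  all (fun p => all (fun q => [|| p == q, R p q | has (fun r => R p r != R q r) (iota 0 8)])
    (iota 0 8)) (iota 0 8).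
Definition okwn (R h : nat -> nat -> bool) (s : seq nat) :=
  [&& size s == 5, uniq s, all (fun x => x < 8) s &
  all (fun k => all (fun m => R (nth 0 s k) (nth 0 s m) == h k m) (iota 0 5)) (iota 0 5)].
Definition p5n (i j : nat) : bool := (i.+1 == j) || (j.+1 == i).
Definition chairn (i j : nat) : bool :=
  [|| [&& i < 4, j < 4 & (i.+1 == j) || (j.+1 == i)],
      (i == 4) && (j == 1) | (i == 1) && (j == 4)].
Definition table : seq (seq nat) := [::
[:: 1; 1; 0; 5; 7; 4];
[:: 1; 1; 0; 4; 3; 7];
[:: 1; 0; 1; 2; 3; 7];
[:: 0; 1; 7; 5; 3; 4];
[:: 0; 0; 4; 3; 2; 7];
[:: 1; 1; 0; 4; 3; 7];
[:: 0; 0; 4; 3; 2; 7];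
[:: 0; 1; 7; 5; 3; 4];
[:: 0; 0; 1; 2; 3; 7];
[:: 1; 4; 0; 1; 2; 7];
[:: 1; 2; 1; 0; 4; 7];
[:: 1; 4; 0; 6; 2; 7];
[:: 0; 1; 0; 4; 3; 7];
[::];
[:: 1; 4; 0; 1; 7; 6];
[:: 1; 4; 3; 7; 1; 6];
[:: 1; 0; 4; 3; 2; 7];
[:: 1; 1; 0; 6; 3; 7];
[:: 1; 0; 1; 2; 3; 7];
[:: 0; 1; 7; 4; 3; 6];
[:: 1; 1; 0; 4; 7; 6];
[:: 1; 1; 0; 6; 3; 7];
[:: 0; 1; 7; 4; 3; 6];
[:: 0; 1; 7; 4; 3; 6];
[:: 0; 0; 1; 2; 3; 7];
[:: 0; 1; 2; 5; 7; 4];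
[:: 1; 1; 7; 5; 6; 4];
[:: 1; 1; 7; 5; 6; 4];
[:: 1; 1; 0; 4; 7; 6];
[:: 1; 1; 2; 7; 4; 6];
[:: 1; 1; 7; 5; 6; 4];
[:: 1; 1; 7; 5; 6; 4];
[:: 1; 0; 1; 5; 7; 2];
[:: 0; 0; 7; 5; 3; 2];
[:: 1; 0; 1; 2; 3; 7];
[:: 0; 0; 7; 5; 3; 2];
[:: 1; 0; 1; 2; 7; 6];
[:: 0; 0; 7; 2; 3; 6];
[:: 1; 0; 1; 6; 3; 7];
[:: 0; 0; 7; 2; 3; 6];
[:: 0; 0; 1; 2; 3; 7];
[:: 1; 2; 1; 0; 7; 6];
[:: 1; 2; 1; 0; 4; 7];
[:: 1; 2; 1; 6; 4; 7];
[:: 1; 0; 1; 2; 7; 6];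
[:: 1; 0; 7; 5; 6; 2];
[:: 0; 0; 4; 5; 7; 2];
[:: 1; 0; 7; 5; 6; 2];
[:: 1; 0; 1; 5; 7; 2];
[:: 0; 0; 7; 5; 3; 2];
[:: 1; 0; 1; 2; 3; 7];
[:: 0; 0; 7; 5; 3; 2];
[:: 1; 0; 1; 2; 7; 6];
[:: 0; 0; 7; 2; 3; 6];
[:: 1; 0; 1; 6; 3; 7];
[:: 0; 0; 7; 2; 3; 6];
[:: 0; 0; 1; 2; 3; 7];
[:: 1; 2; 1; 0; 7; 6];
[::];
[:: 1; 2; 3; 7; 0; 6];
[:: 1; 0; 1; 2; 7; 6];
[:: 1; 0; 7; 5; 6; 2];
[:: 1; 0; 4; 7; 2; 6];
[:: 1; 0; 7; 5; 6; 2];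
[:: 1; 0; 5; 2; 3; 7];
[:: 1; 1; 0; 4; 3; 7];
[:: 1; 0; 1; 2; 3; 7];
[:: 0; 1; 7; 5; 4; 3];
[:: 0; 0; 4; 3; 2; 7];
[:: 1; 1; 0; 4; 3; 7];
[:: 0; 0; 4; 3; 2; 7];
[:: 0; 1; 7; 5; 4; 3];
[:: 0; 0; 1; 2; 3; 7];
[:: 1; 1; 0; 7; 3; 6];
[:: 0; 0; 6; 2; 3; 7];
[:: 0; 1; 7; 3; 4; 6];
[:: 0; 1; 0; 4; 3; 7];
[:: 1; 1; 0; 7; 3; 6];
[:: 0; 1; 7; 3; 4; 6];
[:: 0; 1; 7; 3; 4; 6];
[:: 1; 0; 4; 3; 2; 7];
[:: 0; 1; 2; 3; 4; 7];
[:: 1; 0; 1; 2; 3; 7];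
[:: 1; 3; 2; 1; 7; 6];
[:: 1; 3; 2; 1; 0; 7];
[::];
[:: 1; 3; 2; 6; 0; 7];
[:: 1; 3; 4; 7; 1; 6];
[:: 0; 0; 1; 2; 3; 7];
[:: 1; 1; 0; 7; 3; 6];
[:: 0; 0; 6; 2; 3; 7];
[:: 1; 1; 7; 5; 6; 3];
[:: 0; 1; 0; 5; 7; 3];
[:: 1; 1; 0; 7; 3; 6];
[:: 1; 1; 7; 5; 6; 3];
[:: 1; 1; 7; 5; 6; 3];
[:: 1; 0; 5; 3; 2; 7];
[:: 1; 1; 0; 4; 3; 7];
[:: 1; 0; 1; 2; 3; 7];
[:: 0; 2; 3; 4; 0; 7];
[:: 0; 0; 4; 3; 2; 7];
[:: 1; 1; 0; 4; 3; 7];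
[:: 0; 0; 4; 3; 2; 7];
[:: 1; 4; 0; 7; 2; 6];
[:: 0; 0; 1; 2; 3; 7];
[:: 1; 4; 0; 1; 2; 7];
[:: 1; 2; 1; 0; 4; 7];
[::];
[:: 0; 1; 0; 4; 3; 7];
[:: 1; 4; 0; 7; 2; 6];
[:: 0; 2; 7; 5; 0; 4];
[:: 1; 4; 0; 7; 2; 6];
[:: 1; 0; 4; 3; 2; 7];
[:: 0; 1; 2; 3; 4; 7];
[:: 1; 0; 1; 2; 3; 7];
[:: 1; 2; 1; 7; 4; 6];
[:: 0; 0; 6; 3; 2; 7];
[:: 0; 1; 6; 3; 4; 7];
[:: 0; 0; 6; 3; 2; 7];
[:: 1; 2; 7; 5; 6; 4];
[:: 0; 0; 1; 2; 3; 7];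
[:: 0; 2; 1; 5; 7; 4];
[:: 1; 2; 1; 7; 4; 6];
[:: 1; 2; 1; 7; 4; 6];
[:: 0; 2; 7; 4; 0; 6];
[:: 1; 2; 7; 5; 6; 4];
[:: 0; 2; 7; 4; 0; 6];
[:: 1; 2; 7; 5; 6; 4];
[:: 1; 0; 4; 5; 7; 3];
[:: 0; 0; 7; 5; 2; 3];
[:: 1; 0; 1; 2; 3; 7];
[:: 0; 0; 7; 5; 2; 3];
[:: 0; 0; 4; 3; 2; 7];
[:: 1; 1; 0; 4; 3; 7];
[:: 0; 0; 4; 3; 2; 7];
[:: 1; 3; 2; 7; 0; 6];
[:: 0; 0; 1; 2; 3; 7];
[:: 0; 0; 7; 3; 2; 6];
[:: 1; 0; 1; 7; 3; 6];
[:: 0; 0; 7; 3; 2; 6];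
[:: 0; 0; 1; 5; 7; 3];
[:: 1; 0; 7; 5; 6; 3];
[:: 1; 0; 1; 7; 3; 6];
[:: 1; 0; 7; 5; 6; 3];
[:: 1; 0; 4; 3; 2; 7];
[:: 0; 0; 7; 5; 2; 3];
[:: 1; 0; 1; 2; 3; 7];
[:: 0; 0; 7; 5; 2; 3];
[:: 1; 3; 2; 1; 0; 7];
[:: 1; 3; 2; 7; 0; 6];
[::];
[:: 1; 3; 2; 7; 0; 6];
[:: 0; 0; 1; 2; 3; 7];
[:: 0; 0; 7; 3; 2; 6];
[:: 1; 0; 1; 7; 3; 6];
[:: 0; 0; 7; 3; 2; 6];
[:: 0; 0; 1; 5; 7; 3];
[:: 1; 0; 7; 5; 6; 3];
[:: 1; 0; 1; 7; 3; 6];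
[:: 1; 0; 7; 5; 6; 3]].
Definition code (l : seq bool) : nat :=
  nth false l 0 + 2 * nth false l 1 + 4 * nth false l 2 + 8 * nth false l 3 + 16 * nth false l 4.
Definition W (i : nat) (l : seq bool) : seq nat := nth [::] table (i * 32 + code l).
Definition goodn (i : nat) (l : seq bool) : bool :=
  twinfreen (Hn i l) &&
  okwn (Hn i l) (if head 0 (W i l) == 0 then p5n else chairn) (behead (W i l)).

Definition bools := [:: true; false].
Lemma table_ok : all (fun i => all (fun b0 => all (fun b1 => all (fun b2 => all (fun b3 =>
  all (fun b4 => has (fun j => nth false [:: b0; b1; b2; b3; b4] j != spn i j) (iota 0 5)
     ==> goodn i [:: b0; b1; b2; b3; b4]) bools) bools) bools) bools) bools) (iota 0 5).
Proof. vm_compute. reflexivity. Qed.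

Lemma embed (T : finType) (e : rel T) (g : nat -> T) (R h : nat -> nat -> bool) s
  (hh : rel 'I_5) :
  irreflexive e -> (forall p q, p < 8 -> q < 8 -> e (g p) (g q) = R p q) ->
  twinfreen R -> okwn R h s -> (forall j k : 'I_5, hh j k = h j k) ->
  contains_induced e hh.
Proof.
move=> irr Hg tw /and4P [/eqP ss us als /allP hm] hE.
have s8 : forall k, k < 5 -> nth 0 s k < 8.
  by move=> k kl; apply: (allP als); rewrite mem_nth // ss.
have ginj : forall p q, p < 8 -> q < 8 -> g p = g q -> p = q.
  move=> p q p8 q8 gpq; apply/eqP.
  have := allP tw p; rewrite mem_iota add0n => /(_ p8) /allP /(_ q).
  rewrite mem_iota add0n => /(_ q8) /or3P [//| | /hasP [r]].
  - by rewrite -Hg // gpq irr.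
  - rewrite mem_iota add0n => r8; by rewrite -!Hg // gpq eqxx.
exists (fun k => g (nth 0 s k)); split.
- move=> k m /ginj; rewrite !s8 // => /(_ isT isT) /eqP.
  rewrite nth_uniq ?ss // => /eqP km; exact: val_inj.
- move=> j k; rewrite Hg ?s8 // hE.
  have := hm j; rewrite mem_iota add0n => /(_ (ltn_ord j)) /allP /(_ k).
  by rewrite mem_iota add0n => /(_ (ltn_ord k)) /eqP.
Qed.

Lemma edge_change (T : finType) (r : rel T) (P : pred T) x y :
  connect r x y -> P x -> ~~ P y ->
  exists a b, [/\ connect r x a, r a b, P a & ~~ P b].
Proof.
move/connectP=> [p pth ->]; elim: p x pth => [|w p IH] x /= pth Px nPl.
  by rewrite Px in nPl.
case/andP: pth => rxw pw; case: (boolP (P w)) => Pw.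
  have [a [b [c1 rab Pa nPb]]] := IH w pw Pw nPl.
  by exists a, b; split => //; apply: connect_trans (connect1 rxw) c1.
by exists x, w; split.
Qed.

Lemma mem_bools (b : bool) : b \in bools. Proof. by case: b. Qed.

Theorem mainTheorem8 (T : finType) (e : rel T) :
  simple_graph e ->
  free_of e P5_rel -> free_of e chair_rel ->
  vertex_critical e 5 ->
  forall v : 'I_5 -> T, induced_C5 e v ->
  forall (i : 'I_5) (x : T), x \in S23 e v i ->
    homogeneous e (component e (S23 e v i) x).
Proof.
move=> [esym eirr] fP5 fch _ v [vinj vC5] i x xS z zK.
set S := S23 e v i.
case: (boolP [forall y, (y \in component e S x) ==> e z y]) => [/forallP H1|/forallPn [y1]].
  by left=> y yK; exact: implyP (H1 y) yK.
rewrite negb_imply => /andP [y1K nz1].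
case: (boolP [forall y, (y \in component e S x) ==> ~~ e z y]) => [/forallP H2|/forallPn [y2]].
  by right=> y yK; exact: implyP (H2 y) yK.
rewrite negb_imply negbK => /andP [y2K z2].
exfalso.
set R := induced_rel e S.
have Rsym : forall a b, R a b -> R b a.
  by move=> a b /and3P [? ? ?]; apply/and3P; split => //; rewrite esym.
rewrite /component !inE in y1K. rewrite /component !inE in y2K. rewrite /component !inE in zK.
have [a [b [ca cb Rab za nzb]]] :
    exists a b, [/\ connect R x a, connect R x b, R a b, e z a & ~~ e z b].
  have z2n : ~~ ~~ e z y2 by rewrite negbK.
  case: (boolP (e z x)) => zx.
    have [a [b [ca rab Pa nPb]]] := edge_change (P := e z) y1K zx nz1.
    by exists a, b; split => //; apply: connect_trans ca (connect1 rab).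
  have [a [b [ca rab Pa nPb]]] := edge_change (P := fun y => ~~ e z y) y2K zx z2n.
  exists b, a; split => //; last by rewrite negbK in nPb.
    by apply: connect_trans ca (connect1 rab).
  by apply: Rsym.
case/and3P: (Rab) => aS bS eab.
have Sfacts : forall y, y \in S -> (forall j, y != v j) /\ forall j, e y (v j) = spn i j.
  move=> y; rewrite /S /S23 inE => /andP [/forallP h1 /forallP h2]; split => // j.
  by move: (h2 j) => /eqP ->.
case: (boolP (z \in S)) => zS.
  have Raz : R a z by apply/and3P; split => //; rewrite esym.
  by move: zK; rewrite (connect_trans ca (connect1 Raz)).
case: (boolP [exists j, z == v j]) => [/existsP [j /eqP zj]|].
  have [_ ha] := Sfacts a aS; have [_ hb] := Sfacts b bS.
  rewrite zj in za nzb; rewrite esym ha in za; rewrite esym hb in nzb.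
  by rewrite za in nzb.
rewrite negb_exists => /forallP zC.
move: zS; rewrite /S /S23 inE negb_and => /orP [/forallPn [j]|/forallPn [j0 hj0]].
  by rewrite negbK (negbTE (zC j)).
pose vn n := v (inord n).
have vnj : forall j : 'I_5, v j = vn j by move=> j; rewrite /vn inord_val.
pose l := [:: e z (vn 0); e z (vn 1); e z (vn 2); e z (vn 3); e z (vn 4)].
have nthl : forall j : 'I_5, nth false l j = e z (v j).
  by case=> [[|[|[|[|[|m]]]]] Hm] //=; rewrite [in RHS]vnj.
have cond : has (fun j => nth false l j != spn i j) (iota 0 5).
  by apply/hasP; exists (val j0); rewrite ?mem_iota ?add0n ?ltn_ord // nthl.
pose g n := if n < 5 then vn n else if n == 5 then a else if n == 6 then b else z.
have eC : forall p q, p < 5 -> q < 5 -> e (vn p) (vn q) = c5n p q.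
  by move=> p q hp hq; rewrite /vn vC5 /= !inordK.
have eA : forall q, q < 5 -> e a (vn q) = spn i q.
  by move=> q hq; have [_ ->] := Sfacts a aS; rewrite inordK.
have eB : forall q, q < 5 -> e b (vn q) = spn i q.
  by move=> q hq; have [_ ->] := Sfacts b bS; rewrite inordK.
have eZ : forall q, q < 5 -> e z (vn q) = nth false l q.
  by move=> q hq; have := nthl (inord q); rewrite inordK // => ->.
have Gedge : forall p q, p < 8 -> q < 8 -> e (g p) (g q) = Hn i l p q.
  move=> p q p8 q8; rewrite /g /Hn /adjC.
  case: (ltnP p 5) => p5; case: (ltnP q 5) => q5.
  - exact: eC.
  - case: q q5 q8 => [|[|[|[|[|[|[|[|[|q]]]]]]]]] //= _ _; rewrite esym.
    + exact: eA. + exact: eB. + exact: eZ.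
  - case: p p5 p8 => [|[|[|[|[|[|[|[|[|p]]]]]]]]] //= _ _.
    + exact: eA. + exact: eB. + exact: eZ.
  - case: q q5 q8 => [|[|[|[|[|[|[|[|[|q]]]]]]]]] //= _ _;
    case: p p5 p8 => [|[|[|[|[|[|[|[|[|p]]]]]]]]] //= _ _;
    rewrite ?eirr ?eab ?za ?(negbTE nzb) ?(esym b a) ?eab ?(esym a z) ?za //.
    by rewrite esym (negbTE nzb).
move: table_ok => /allP /(_ (val i)); rewrite mem_iota add0n ltn_ord => /(_ isT).
move=> /allP /(_ _ (mem_bools (e z (vn 0)))) /allP /(_ _ (mem_bools (e z (vn 1)))).
move=> /allP /(_ _ (mem_bools (e z (vn 2)))) /allP /(_ _ (mem_bools (e z (vn 3)))).
move=> /allP /(_ _ (mem_bools (e z (vn 4)))) /implyP /(_ cond) /andP [tw ok].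
case: (head 0 (W i l) == 0) in ok.
  by apply: fP5; apply: (embed eirr Gedge tw ok).
by apply: fch; apply: (embed eirr Gedge tw ok).
Qed.
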